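(* Let $n\ge 1$ and $\mathcal{P}=\{x\in\mathbb{R}^n : \tfrac12(\max_i x_i-\min_i x_i)\le 1\}$. The number of faces of $\mathcal{P}$ (including $\mathcal{P}$ itself) is $3^n-2^{n+1}+2$.
   Context: A face of a polyhedron $\mathcal{Q}\subseteq\mathbb{R}^n$ is a non-empty subset $F$ with either $F=\mathcal{Q}$ or $F=\mathcal{Q}\cap\{x: b^\top x=c\}$ for some $b\in\mathbb{R}^n$, $c\in\mathbb{R}$ with $b^\top x\le c$ for all $x\in\mathcal{Q}$. *)

(* Defs.v *)
From mathcomp Require Import all_boot all_order all_algebra.
Set Implicit Arguments. Unset Strict Implicit. Unset Printing Implicit Defensive.
Import Order.TTheory GRing.Theory Num.Theory.
Local Open Scope ring_scope.

(* max_i x_i and min_i x_i (the initial value is x_0, irrelevant by idempotence when n >= 1). *)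
Definition vmax (R : realFieldType) (n : nat) (x : 'rV[R]_n) : R :=
  let s := [seq x 0 i | i <- enum 'I_n] in \big[Num.max/head 0 s]_(v <- s) v.
Definition vmin (R : realFieldType) (n : nat) (x : 'rV[R]_n) : R :=
  let s := [seq x 0 i | i <- enum 'I_n] in \big[Num.min/head 0 s]_(v <- s) v.

Definition Pset (R : realFieldType) (n : nat) : 'rV[R]_n -> Prop :=
  fun x => (vmax x - vmin x) / 2 <= 1.

Definition dotv (R : realFieldType) (n : nat) (b x : 'rV[R]_n) : R :=
  \sum_(i < n) b 0 i * x 0 i.

Definition is_face (R : realFieldType) (n : nat) (Q F : 'rV[R]_n -> Prop) : Prop :=
  (exists x, F x) /\
  ((forall x, F x <-> Q x) \/
   exists (b : 'rV[R]_n) (c : R),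
     (forall x, Q x -> dotv b x <= c) /\
     (forall x, F x <-> (Q x /\ dotv b x = c))).

(* Main.v *)
Require Import Defs.
From mathcomp Require Import all_boot all_order all_algebra.
From mathcomp Require Import ring lra zify.
From Stdlib Require Import FunctionalExtensionality PropExtensionality.
Set Implicit Arguments. Unset Strict Implicit. Unset Printing Implicit Defensive.
Import Order.TTheory GRing.Theory Num.Theory.
Local Open Scope ring_scope.

Section Main.
Variable R : realFieldType.
Variable n : nat.
Local Notation V := 'rV[R]_n.

Lemma maxr_cases (a b : R) : Num.max a b = a \/ Num.max a b = b.
Proof. rewrite /Order.max; case: ltP => H; [right|left]; done. Qed.
Lemma minr_cases (a b : R) : Num.min a b = a \/ Num.min a b = b.
Proof. rewrite /Order.min; case: ltP => H; [left|right]; done. Qed.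
Lemma maxr_ge (a b : R) : a <= Num.max a b /\ b <= Num.max a b.
Proof. rewrite /Order.max; case: ltP => H; split; lra. Qed.
Lemma minr_le (a b : R) : Num.min a b <= a /\ Num.min a b <= b.
Proof. rewrite /Order.min; case: ltP => H; split; lra. Qed.

Lemma bigmax_ge (s : seq R) h v : v \in s -> v <= \big[Num.max/h]_(u <- s) u.
Proof.
elim: s => [//|a s IH]; rewrite inE big_cons => /orP [/eqP -> | /IH H].
  by case: (maxr_ge a (\big[Num.max/h]_(u <- s) u)).
case: (maxr_ge a (\big[Num.max/h]_(u <- s) u)) => _ H2; exact: le_trans H H2.
Qed.
Lemma bigmin_le (s : seq R) h v : v \in s -> \big[Num.min/h]_(u <- s) u <= v.
Proof.
elim: s => [//|a s IH]; rewrite inE big_cons => /orP [/eqP -> | /IH H].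
  by case: (minr_le a (\big[Num.min/h]_(u <- s) u)).
case: (minr_le a (\big[Num.min/h]_(u <- s) u)) => _ H2; exact: le_trans H2 H.
Qed.

Lemma bigmax_in (s : seq R) h : \big[Num.max/h]_(u <- s) u \in h :: s.
Proof.
elim: s => [|a s IH]; first by rewrite big_nil mem_head.
rewrite big_cons; case: (maxr_cases a (\big[Num.max/h]_(u <- s) u)) => ->.
  by rewrite !inE eqxx orbT.
move: IH; rewrite !inE => /orP [->//|->]; by rewrite !orbT.
Qed.
Lemma bigmin_in (s : seq R) h : \big[Num.min/h]_(u <- s) u \in h :: s.
Proof.
elim: s => [|a s IH]; first by rewrite big_nil mem_head.
rewrite big_cons; case: (minr_cases a (\big[Num.min/h]_(u <- s) u)) => ->.
  by rewrite !inE eqxx orbT.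
move: IH; rewrite !inE => /orP [->//|->]; by rewrite !orbT.
Qed.

Lemma vmax_ge (x : V) i : x 0 i <= vmax x.
Proof. apply: bigmax_ge; apply/mapP; exists i => //; by rewrite mem_enum. Qed.
Lemma vmin_le (x : V) i : vmin x <= x 0 i.
Proof. apply: bigmin_le; apply/mapP; exists i => //; by rewrite mem_enum. Qed.

Lemma head_in (s : seq R) : (0 < size s)%N -> head 0 s \in s.
Proof. by case: s => // a s _; rewrite mem_head. Qed.

Lemma vmax_ex (x : V) : (0 < n)%N -> exists i, vmax x = x 0 i.
Proof.
move=> hn; set s := [seq x 0 i | i <- enum 'I_n].
have hs : (0 < size s)%N by rewrite size_map size_enum_ord.
have : vmax x \in s.
  have := bigmax_in s (head 0 s); rewrite /vmax -/s inE => /orP [/eqP ->|//].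
  exact: head_in.
by case/mapP => i _ ->; exists i.
Qed.
Lemma vmin_ex (x : V) : (0 < n)%N -> exists i, vmin x = x 0 i.
Proof.
move=> hn; set s := [seq x 0 i | i <- enum 'I_n].
have hs : (0 < size s)%N by rewrite size_map size_enum_ord.
have : vmin x \in s.
  have := bigmin_in s (head 0 s); rewrite /vmin -/s inE => /orP [/eqP ->|//].
  exact: head_in.
by case/mapP => i _ ->; exists i.
Qed.

Lemma P_iff (x : V) : (0 < n)%N -> Pset x <-> forall i j, x 0 i - x 0 j <= 2.
Proof.
move=> hn; rewrite /Pset; split.
  move=> H i j; have := vmax_ge x i; have := vmin_le x j; lra.
move=> H; case: (vmax_ex x hn) => i ->; case: (vmin_ex x hn) => j ->.
have := H i j; lra.
Qed.

Definition brow (pI pJ : pred 'I_n) (w : 'I_n -> 'I_n -> R) : V :=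
  \row_k \sum_(i | pI i) \sum_(j | pJ j) w i j * ((k == i)%:R - (k == j)%:R).

Lemma sum_delta (F : 'I_n -> R) i : \sum_k (k == i)%:R * F k = F i.
Proof.
rewrite (eq_bigr (fun k => if k == i then F k else 0)); last first.
  by move=> k _; case: eqP => _; rewrite ?mul1r ?mul0r.
by rewrite -big_mkcond big_pred1_eq.
Qed.

Lemma dot_brow (pI pJ : pred 'I_n) (w : 'I_n -> 'I_n -> R) (x : V) :
  dotv (brow pI pJ w) x = \sum_(i | pI i) \sum_(j | pJ j) w i j * (x 0 i - x 0 j).
Proof.
rewrite /dotv.
under eq_bigr do rewrite mxE mulr_suml.
rewrite exchange_big /=.
apply: eq_bigr => i _.
under eq_bigr do rewrite mulr_suml.
rewrite exchange_big /=; apply: eq_bigr => j _.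
transitivity (\sum_k (w i j * ((k == i)%:R * x 0 k) - w i j * ((k == j)%:R * x 0 k))).
  apply: eq_bigr => k _; ring.
by rewrite sumrB -!mulr_sumr !sum_delta mulrBr.
Qed.

Lemma brow_le (pI pJ : pred 'I_n) (w : 'I_n -> 'I_n -> R) (x : V) : (0 < n)%N -> Pset x ->
  (forall i j, pI i -> pJ j -> 0 <= w i j) ->
  dotv (brow pI pJ w) x <= \sum_(i | pI i) \sum_(j | pJ j) w i j * 2.
Proof.
move=> hn /(P_iff x hn) HP Hw; rewrite dot_brow -subr_ge0 -sumrB.
apply: sumr_ge0 => i Hi; rewrite -sumrB; apply: sumr_ge0 => j Hj.
rewrite -mulrBr; apply: mulr_ge0; [exact: Hw | have := HP i j; lra].
Qed.

Lemma brow_eq (pI pJ : pred 'I_n) (w : 'I_n -> 'I_n -> R) (x : V) : (0 < n)%N -> Pset x ->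
  (forall i j, pI i -> pJ j -> 0 < w i j) ->
  (dotv (brow pI pJ w) x = \sum_(i | pI i) \sum_(j | pJ j) w i j * 2 <->
  (forall i j, pI i -> pJ j -> x 0 i - x 0 j = 2)).
Proof.
move=> hn Px Hw; have HP := (P_iff x hn).1 Px; rewrite dot_brow; split; last first.
  by move=> H; apply: eq_bigr => i Hi; apply: eq_bigr => j Hj; rewrite H.
move=> E.
have E0 : \sum_(i | pI i) \sum_(j | pJ j) (w i j * 2 - w i j * (x 0 i - x 0 j)) = 0.
  under eq_bigr => i _ do rewrite sumrB.
  by rewrite sumrB E subrr.
have G0 : forall i, pI i -> 0 <= \sum_(j | pJ j) (w i j * 2 - w i j * (x 0 i - x 0 j)).
  move=> i Hi; apply: sumr_ge0 => j Hj; rewrite -mulrBr.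
  apply: mulr_ge0; [exact: ltW (Hw _ _ Hi Hj) | have := HP i j; lra].
move=> i j Hi Hj.
have E1 := psumr_eq0P G0 E0 Hi.
have G1 : forall j, pJ j -> 0 <= w i j * 2 - w i j * (x 0 i - x 0 j).
  move=> j' Hj'; rewrite -mulrBr.
  apply: mulr_ge0; [exact: ltW (Hw _ _ Hi Hj') | have := HP i j'; lra].
have := psumr_eq0P G1 E1 Hj; rewrite -mulrBr => /eqP; rewrite mulf_eq0 => /orP [/eqP H|/eqP H].
  by have := Hw _ _ Hi Hj; rewrite H ltxx.
lra.
Qed.

Definition facep (pI pJ : pred 'I_n) : V -> Prop :=
  fun x => Pset x /\ forall i j, pI i -> pJ j -> x 0 i - x 0 j = 2.

Lemma Pset_const (t : R) : (0 < n)%N -> Pset (const_mx t : V).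
Proof. move=> hn; apply/(P_iff _ hn) => i j; rewrite !mxE subrr; lra. Qed.

Definition ind (p : pred 'I_n) : V := \row_k (if p k then 2 else 0).
Lemma Pset_ind p : (0 < n)%N -> Pset (ind p).
Proof. move=> hn; apply/(P_iff _ hn) => i j; rewrite !mxE; case: (p i); case: (p j) => /=; lra. Qed.

Lemma facep_face (pI pJ : pred 'I_n) : (0 < n)%N -> (forall k, pJ k -> ~~ pI k) ->
  is_face (@Pset R n) (facep pI pJ).
Proof.
move=> hn Hd; split.
  exists (ind pI); split; first exact: Pset_ind.
  move=> i j Hi Hj; rewrite !mxE Hi (negbTE (Hd j Hj)) /=; lra.
right; exists (brow pI pJ (fun _ _ => 1)), (\sum_(i | pI i) \sum_(j | pJ j) 1 * 2).
split; first by move=> x Px; apply: brow_le => // *; exact: ler01.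
have Hw : forall i j, pI i -> pJ j -> (0 : R) < 1 by move=> *; exact: ltr01.
move=> x; split.
  case=> Px H; split => //; exact: (@brow_eq pI pJ (fun _ _ => 1) x hn Px Hw).2.
case=> Px E; split => //; exact: (@brow_eq pI pJ (fun _ _ => 1) x hn Px Hw).1.
Qed.

Lemma face_classify F : (0 < n)%N -> is_face (@Pset R n) F ->
  (forall x, F x <-> Pset x) \/
  exists pI pJ : pred 'I_n, (exists i, pI i) /\ (exists j, pJ j) /\
    (forall k, pJ k -> ~~ pI k) /\ (forall x, F x <-> facep pI pJ x).
Proof.
move=> hn [[x0 Fx0] [HF|[b [c [Hle HF]]]]]; first by left.
pose sb := \sum_k b 0 k.
have dot_const t : dotv b (const_mx t) = sb * t.
  by rewrite /dotv /sb mulr_suml; apply: eq_bigr => k _; rewrite mxE.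
have sb0 : sb = 0.
  case: (eqVneq sb 0) => // Hsb.
  have := Hle _ (Pset_const ((`|c| + 1) / sb) hn).
  rewrite dot_const mulrCA mulfV // mulr1.
  have := ler_norm c; lra.
case: (boolP [forall k, b 0 k == 0]) => Hb.
  have d0 x : dotv b x = 0.
    by rewrite /dotv big1 // => k _; rewrite (eqP (forallP Hb k)) mul0r.
  have c0 : c = 0 by case: ((HF x0).1 Fx0) => _; rewrite d0.
  left => x; rewrite HF d0 c0; split; [by case | by move=> ?; split].
move/forallPn: Hb => [k Hk].
pose pI := [pred k | 0 < b 0 k]; pose pJ := [pred k | b 0 k < 0].
have split_sum (y : 'I_n -> R) : \sum_k b 0 k * y k =
    \sum_(i | pI i) b 0 i * y i + \sum_(j | pJ j) b 0 j * y j.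
  rewrite [in RHS]big_mkcond [X in _ + X]big_mkcond -big_split /=.
  apply: eq_bigr => i _; rewrite /=; case: ltrgtP => H /=; rewrite ?addr0 ?add0r //.
  by rewrite -H mul0r.
pose s := \sum_(i | pI i) b 0 i; pose sJ := \sum_(j | pJ j) b 0 j.
have ssum : s + sJ = 0.
  rewrite -sb0 /sb (eq_bigr (fun k => b 0 k * 1)); last by move=> *; rewrite mulr1.
  by rewrite split_sum /s /sJ; congr (_ + _); apply: eq_bigr => *; rewrite mulr1.
have s_pos : 0 < s.
  case: (ltrgtP (b 0 k) 0) => Hk'.
  - have : sJ <= b 0 k.
      rewrite /sJ (bigD1 k) //=.
      have : \sum_(i | pJ i && (i != k)) b 0 i <= 0.
        by apply: sumr_le0 => i /andP [Hi _]; apply: ltW.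
      lra.
    lra.
  - rewrite /s (bigD1 k) //=.
    have : 0 <= \sum_(i | pI i && (i != k)) b 0 i.
      by apply: sumr_ge0 => i /andP [Hi _]; apply: ltW.
    lra.
  - by rewrite Hk' eqxx in Hk.
have s0 : s != 0 by rewrite gt_eqF.
have exI : exists i, pI i.
  case: (pickP pI) => [i Hi|H0]; first by exists i.
  by move: s_pos; rewrite /s big_pred0 // ltxx.
have exJ : exists j, pJ j.
  case: (pickP pJ) => [j Hj|H0]; first by exists j.
  by move: ssum s_pos; rewrite /sJ big_pred0 // addr0 => ->; rewrite ltxx.
pose w i j := b 0 i * - b 0 j / s.
have Hw : forall i j, pI i -> pJ j -> 0 < w i j.
  move=> i j Hi Hj; rewrite /w; apply: divr_gt0 => //; apply: mulr_gt0 => //.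
  by rewrite oppr_gt0.
have dot_eq x : dotv b x = dotv (brow pI pJ w) x.
  rewrite dot_brow.
  under eq_bigr => i _ do (under eq_bigr => j _ do rewrite mulrBr).
  under eq_bigr => i _ do rewrite sumrB.
  rewrite sumrB.
  have A : \sum_(i | pI i) \sum_(j | pJ j) w i j * x 0 i = \sum_(i | pI i) b 0 i * x 0 i.
    apply: eq_bigr => i _.
    rewrite (eq_bigr (fun j => (b 0 i * x 0 i / s) * - b 0 j)); last first.
      by move=> j _; rewrite /w; ring.
    rewrite -mulr_sumr sumrN -/sJ (_ : - sJ = s); last by lra.
    by field.
  have B : \sum_(i | pI i) \sum_(j | pJ j) w i j * x 0 j = - \sum_(j | pJ j) b 0 j * x 0 j.
    rewrite exchange_big /= -sumrN; apply: eq_bigr => j _.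
    rewrite (eq_bigr (fun i => (- b 0 j * x 0 j / s) * b 0 i)); last first.
      by move=> i _; rewrite /w; ring.
    rewrite -mulr_sumr -/s.
    by field.
  by rewrite A B opprK /dotv split_sum.
have Hw' : forall i j, pI i -> pJ j -> 0 <= w i j by move=> *; apply: ltW; apply: Hw.
have Hd : forall k, pJ k -> ~~ pI k.
  by move=> k'; rewrite !inE => H; rewrite -leNgt ltW.
have cval : c = \sum_(i | pI i) \sum_(j | pJ j) w i j * 2.
  apply/eqP; rewrite eq_le; apply/andP; split.
    case: ((HF x0).1 Fx0) => Px0 <-; rewrite dot_eq; exact: brow_le.
  have := Hle _ (Pset_ind pI hn).
  rewrite dot_eq (_ : dotv _ _ = \sum_(i | pI i) \sum_(j | pJ j) w i j * 2) //.
  apply/(brow_eq hn (Pset_ind pI hn) Hw) => i j Hi Hj.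
  rewrite !mxE Hi (negbTE (Hd j Hj)) /=; lra.
right; exists pI, pJ; do 3 (split => //).
move=> x; rewrite HF; split.
  case=> Px E; split => //; apply/(brow_eq hn Px Hw).
  by rewrite -dot_eq E cval.
case=> Px H; split => //; rewrite dot_eq cval; exact/(brow_eq hn Px Hw).
Qed.

Definition jnd (p : pred 'I_n) : V := \row_k (if p k then 0 else 2).
Lemma Pset_jnd p : (0 < n)%N -> Pset (jnd p).
Proof. move=> hn; apply/(P_iff _ hn) => i j; rewrite !mxE; case: (p i); case: (p j) => /=; lra. Qed.

Lemma facep_sub (pI pJ pI' pJ' : pred 'I_n) : (0 < n)%N -> (forall k, pJ k -> ~~ pI k) ->
  (exists i, pI' i) -> (exists j, pJ' j) ->
  (forall x, facep pI pJ x -> facep pI' pJ' x) ->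
  (forall k, pI' k -> pI k) /\ (forall k, pJ' k -> pJ k).
Proof.
move=> hn Hd [i' Hi'] [j' Hj'] H; split => k Hk.
  have [_ Hy] : facep pI' pJ' (ind pI).
    apply: H; split; first exact: Pset_ind.
    move=> i j Hi Hj; rewrite !mxE Hi (negbTE (Hd j Hj)) /=; lra.
  have := Hy k j' Hk Hj'; rewrite !mxE; case: (pI k) => //; case: (pI j') => /= E; exfalso; lra.
have [_ Hy] : facep pI' pJ' (jnd pJ).
  apply: H; split; first exact: Pset_jnd.
  move=> i j Hi Hj; rewrite !mxE Hj.
  have -> : pJ i = false by apply/negP => /Hd; rewrite Hi.
  rewrite /=; lra.
have := Hy i' k Hi' Hk; rewrite !mxE; case: (pJ k) => //; case: (pJ i') => /= E; exfalso; lra.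
Qed.

Local Notation T := {ffun 'I_n -> 'I_3}.
Definition gI (g : T) : pred 'I_n := [pred k | val (g k) == 0%N].
Definition gJ (g : T) : pred 'I_n := [pred k | val (g k) == 1%N].
Definition faceg (g : T) := facep (gI g) (gJ g).
Definition Sg : {set T} := [set g : T | [exists k, gI g k] && [exists k, gJ g k]].

Lemma gdisj (g : T) k : gJ g k -> ~~ gI g k.
Proof. by rewrite /gI /gJ !inE => /eqP ->. Qed.

Lemma faceg_inj (g1 g2 : T) : (0 < n)%N -> g1 \in Sg -> g2 \in Sg -> faceg g1 = faceg g2 -> g1 = g2.
Proof.
move=> hn; rewrite !inE => /andP [/existsP e1 /existsP f1] /andP [/existsP e2 /existsP f2] E.
have [HI12 HJ12] := @facep_sub (gI g1) (gJ g1) (gI g2) (gJ g2) hn (@gdisj g1) e2 f2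
  (fun x => eq_ind _ (fun P => P x -> faceg g2 x) id _ (esym E)).
have [HI21 HJ21] := @facep_sub (gI g2) (gJ g2) (gI g1) (gJ g1) hn (@gdisj g2) e1 f1
  (fun x => eq_ind _ (fun P => P x -> faceg g1 x) id _ E).
apply/ffunP => k; apply: val_inj.
have a0 : (val (g1 k) == 0%N) = (val (g2 k) == 0%N) by apply/idP/idP; [apply: HI21 | apply: HI12].
have a1 : (val (g1 k) == 1%N) = (val (g2 k) == 1%N) by apply/idP/idP; [apply: HJ21 | apply: HJ12].
have b1 : (val (g1 k) < 3)%N := ltn_ord _.
have b2 : (val (g2 k) < 3)%N := ltn_ord _.
move: a0 a1 b1 b2.
by case: (val (g1 k)) => [|[|[|?]]]; case: (val (g2 k)) => [|[|[|?]]].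
Qed.

Lemma card_Sg : (#|Sg|.+1 = 3 ^ n + 2 - 2 ^ n.+1)%N.
Proof.
pose A0 : {set T} := [set g : T | [forall k, ~~ gI g k]].
pose A1 : {set T} := [set g : T | [forall k, ~~ gJ g k]].
have eS : Sg = ~: (A0 :|: A1).
  apply/setP => g; rewrite !inE negb_or !negb_forall.
  congr (_ && _); apply: eq_existsb => k; by rewrite negbK.
have cT : #|T| = (3 ^ n)%N by rewrite card_ffun !card_ord.
have D0 : #|[pred x : 'I_3 | val x != 0%N]| = 2%N.
  rewrite (eq_card (B := predC1 (ord0 : 'I_3))) ?cardC1 ?card_ord // => x.
have D1 : #|[pred x : 'I_3 | val x != 1%N]| = 2%N.
  rewrite (eq_card (B := predC1 (inord 1 : 'I_3))) ?cardC1 ?card_ord // => x.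
  by rewrite !inE -val_eqE /= inordK.
have D2 : #|[pred x : 'I_3 | val x == 2%N]| = 1%N.
  rewrite (eq_card (B := pred1 (inord 2 : 'I_3))) ?card1 // => x.
  by rewrite !inE -val_eqE /= inordK.
have c0 : #|A0| = (2 ^ n)%N.
  transitivity (#|[pred x : 'I_3 | val x != 0%N]| ^ #|'I_n|)%N; last by rewrite D0 card_ord.
  rewrite -card_ffun_on; apply: eq_card => g.
  rewrite inE; apply/forallP/ffun_onP => H k; by have := H k; rewrite !inE.
have c1 : #|A1| = (2 ^ n)%N.
  transitivity (#|[pred x : 'I_3 | val x != 1%N]| ^ #|'I_n|)%N; last by rewrite D1 card_ord.
  rewrite -card_ffun_on; apply: eq_card => g.
  rewrite inE; apply/forallP/ffun_onP => H k; by have := H k; rewrite !inE.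
have c01 : #|A0 :&: A1| = 1%N.
  transitivity (#|[pred x : 'I_3 | val x == 2%N]| ^ #|'I_n|)%N; last by rewrite D2 exp1n.
  rewrite -card_ffun_on; apply: eq_card => g.
  rewrite !inE; apply/andP/ffun_onP => [[/forallP H0 /forallP H1] k | H].
    have := H0 k; have := H1 k; have b : (val (g k) < 3)%N := ltn_ord _.
    rewrite /gI /gJ !inE /=; by case: (g k) => [[|[|[|?]]] ?].
  by split; apply/forallP => k; have := H k; rewrite /gI /gJ !inE => /eqP ->.
have cU := cardsU A0 A1.
have cC := cardsC (A0 :|: A1).
have le : (#|A0 :|: A1| <= #|T|)%N by apply: max_card.
have p : (0 < 2 ^ n)%N by rewrite expn_gt0.
rewrite eS expnS; move: cU cC le p; rewrite c0 c1 c01 cT.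
set a := (2 ^ n)%N; set t := (3 ^ n)%N; set u := #|A0 :|: A1|; set v := #|~: (A0 :|: A1)|.
move=> cU cC le p; lia.
Qed.

End Main.
Theorem corollary1 (R : realFieldType) (n : nat) (hn : (1 <= n)%N) :
  exists f : 'I_(3 ^ n + 2 - 2 ^ n.+1) -> ('rV[R]_n -> Prop),
    injective f /\
    (forall F : 'rV[R]_n -> Prop, is_face (@Pset R n) F <-> exists i, F = f i).
Proof.
have E : (3 ^ n + 2 - 2 ^ n.+1 = #|Sg n|.+1)%N by rewrite card_Sg.
pose f (i : 'I_(3 ^ n + 2 - 2 ^ n.+1)) : 'rV[R]_n -> Prop :=
  match unlift ord0 (cast_ord E i) with
  | None => @Pset R n
  | Some k => @faceg R n (enum_val k)
  end.
have Pneq (g : {ffun 'I_n -> 'I_3}) : g \in Sg n -> @faceg R n g <> @Pset R n.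
  rewrite inE => /andP [/existsP [i Hi] /existsP [j Hj]] Heq.
  have := @Pset_const R n 0 hn; rewrite -Heq => -[_ /(_ i j Hi Hj)]; rewrite !mxE subrr.
  lra.
exists f; split.
  move=> i1 i2; rewrite /f.
  case: (unliftP ord0 (cast_ord E i1)) => [k1 e1|e1];
  case: (unliftP ord0 (cast_ord E i2)) => [k2 e2|e2].
  - move/(faceg_inj hn (enum_valP k1) (enum_valP k2))/enum_val_inj => ek.
    by apply: (cast_ord_inj (eq_n := E)); rewrite e1 e2 ek.
  - by move=> H; case: (Pneq _ (enum_valP k1) H).
  - by move=> H; case: (Pneq _ (enum_valP k2) (esym H)).
  - by move=> _; apply: (cast_ord_inj (eq_n := E)); rewrite e1 e2.
move=> F; split.
  move=> HF; case: (face_classify hn HF) => [HP | [pI [pJ [exI [exJ [Hd HFp]]]]]].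
    exists (cast_ord (esym E) ord0); rewrite /f cast_ordKV unlift_none.
    apply: functional_extensionality => x; apply: propositional_extensionality; exact: HP.
  pose g : {ffun 'I_n -> 'I_3} :=
    [ffun k => if pI k then (inord 0 : 'I_3) else if pJ k then inord 1 else inord 2].
  have gIe k : gI g k = pI k.
    rewrite /gI inE ffunE; case: (pI k) => /=; first by rewrite inordK.
    by case: (pJ k); rewrite inordK.
  have gJe k : gJ g k = pJ k.
    rewrite /gJ inE ffunE; case HI: (pI k) => /=.
      rewrite inordK //; apply/esym/negP => /Hd; by rewrite HI.
    by case: (pJ k); rewrite inordK.
  have gS : g \in Sg n.
    rewrite inE; apply/andP; split; apply/existsP.
      by case: exI => i Hi; exists i; rewrite gIe.
    by case: exJ => j Hj; exists j; rewrite gJe.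
  exists (cast_ord (esym E) (lift ord0 (enum_rank_in gS g))).
  rewrite /f cast_ordKV liftK enum_rankK_in //.
  apply: functional_extensionality => x; apply: propositional_extensionality.
  rewrite HFp /faceg /facep; split; case=> Px H; split => // i j.
    by rewrite !gIe !gJe; apply: H.
  by rewrite -gIe -gJe; apply: H.
case=> i ->; rewrite /f.
case: (unlift ord0 (cast_ord E i)) => [k|].
  by apply: facep_face => //; exact: gdisj.
split; first by exists (const_mx 0); exact: (@Pset_const R n 0 hn).
by left.
Qed.
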